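(* Let $F,G\in\mathbb{A}$, $\vartheta$ and $\tilde H\in\mathbb{A}_q$ be as in the BQTRU key setting below, so that $\tilde H\equiv F^{-1}\circ G+\vartheta\pmod q$, and let $$\chi=\{\tau'\in\mathbb{A}: \exists F'\in\mathbb{A},\ \exists\alpha'\in\mathbb{A}\ \text{with}\ F\circ F'=F'\circ F\equiv 1+\alpha'\circ\tau'\!\!\pmod q\ \text{and}\ \tilde H\equiv F'\circ G+\tau'\!\!\pmod q\}.$$ Then $\vartheta=W\circ\sigma$ has the smallest Hamming norm $\|\overrightarrow{\rho(\cdot)}\|_H$ among elements of $\chi$. Moreover, for every $\tau'\in\chi$ with $\tau'\neq\vartheta$, $$\|\overrightarrow{\rho(F\circ\tau')}\|_H\ \ge\ \|\overrightarrow{\rho(F\circ\vartheta)}\|_H .$$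
   Context: Setting: $n$ prime, $p,q$ distinct primes with $\gcd(p,q)=\gcd(n,q)=1$ and $n\mid(q-1)$. $R'=\mathbb{Z}[x,y]/\langle x^n-1,y^n-1\rangle$, $R'_q=\mathbb{Z}_q[x,y]/\langle x^n-1,y^n-1\rangle$; $\mathbb{A},\mathbb{A}_q,\mathbb{L}_q$ are the quaternion algebras over $R'$, $R'_q$, $\mathbb{Z}_q$ (free module on $1,i,j,k$, scalars central, $i^2=j^2=1$, $i\circ j=-j\circ i=k$); ''$\pmod q$'' means equality after reducing coefficients mod $q$. $E=\{(a,b)\in\mathbb{Z}_q^2:a^n=b^n=1\}$, enumerated $(a_1,b_1),\dots,(a_{n^2},b_{n^2})$; $\lambda_{a,b}(x,y)=\frac{ab}{n^2}\cdot\frac{x^n-1}{x-a}\cdot\frac{y^n-1}{y-b}$ over $\mathbb{Z}_q$. For $X\in\mathbb{A}$ (reduced mod $q$), $\overrightarrow{\rho(X)}\in\mathbb{Z}_q^{4n^2}$ is $(\rho(x_0),\dots,\rho(x_3))$ with $\rho(x_t)=(x_t(a_1,b_1),\dots,x_t(a_{n^2},b_{n^2}))$; $\|\cdot\|_H$ is Hamming weight. Key setting: $G=g_0+g_1i+g_2j+g_3k$, $F=f_0+f_1i+f_2j+f_3k$ with all $f_t,g_t$ ternary; $T=\bigcap_{t=0}^3\{(a,b)\in E:g_t(a,b)=0\}\neq\emptyset$, enumerated first: $T=\{(a_1,b_1),\dots,(a_{|T|},b_{|T|})\}$; zeros of $N(F)=f_0^2-f_1^2-f_2^2-f_3^2$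 in $E$ lie in $T$. $\sigma=\sum_{i=1}^{|T|}q_i\lambda_{a_i,b_i}$ with $q_i\in\mathbb{Z}_q$ nonzero; $Q=\langle q,\sigma\rangle\subseteq R'$, $J=Q+Qi+Qj+Qk$; $F^{-1}\in\mathbb{A}$ satisfies $F\circ F^{-1}=F^{-1}\circ F\equiv1\pmod J$; $W\in\mathbb{L}_q$ invertible with all four components nonzero; $\vartheta=W\circ\sigma$; $\tilde H\equiv F^{-1}\circ G+\vartheta\pmod q$. *)

(* Defs.v *)
From HB Require Import structures.
From mathcomp Require Import all_boot all_order all_algebra.
Set Implicit Arguments. Unset Strict Implicit. Unset Printing Implicit Defensive.
Import Order.TTheory GRing.Theory Num.Theory.
Local Open Scope ring_scope.

(* Elements of R[x,y]/<x^n-1, y^n-1>, represented canonically by their *)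
(* coefficient arrays: f k is the coefficient of x^(k.1) y^(k.2).      *)
(*   R' = RpT int n,   R'_q = RpT 'F_q n.                              *)
Definition RpT (R : Type) (n : nat) := {ffun 'I_n * 'I_n -> R}.

Definition radd (R : nzRingType) n (f g : RpT R n) : RpT R n := [ffun k => f k + g k].
Definition ropp (R : nzRingType) n (f : RpT R n) : RpT R n := [ffun k => - f k].
Definition rzero (R : nzRingType) n : RpT R n := [ffun _ => 0].
Definition rone (R : nzRingType) n : RpT R n :=
  [ffun k => if (nat_of_ord k.1 == 0%N) && (nat_of_ord k.2 == 0%N) then 1 else 0].
Definition rscale (R : nzRingType) n (c : R) (f : RpT R n) : RpT R n := [ffun k => c * f k].
Definition rmul (R : nzRingType) n (f g : RpT R n) : RpT R n :=
  [ffun k => \sum_(i : 'I_n * 'I_n) \sum_(j : 'I_n * 'I_n |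
       (((nat_of_ord i.1 + nat_of_ord j.1) %% n)%N == nat_of_ord k.1)
    && (((nat_of_ord i.2 + nat_of_ord j.2) %% n)%N == nat_of_ord k.2)) f i * g j].

Definition reval (R : nzRingType) n (f : RpT R n) (a b : R) : R :=
  \sum_(k : 'I_n * 'I_n) f k * a ^+ k.1 * b ^+ k.2.

(* Quaternion algebra over a coefficient type T: free module on        *)
(* 1,i,j,k (components 0,1,2,3), i^2 = j^2 = 1, i j = - j i = k.       *)
Definition QuatT (T : Type) := {ffun 'I_4 -> T}.

Definition qmulW (T : Type) (add : T -> T -> T) (opp : T -> T) (mul : T -> T -> T)
    (X Y : QuatT T) : QuatT T :=
  let x t := X (@inord 3 t) in let y t := Y (@inord 3 t) in
  let sub a b := add a (opp b) in
  [ffun t : 'I_4 => match nat_of_ord t with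
    | 0 => sub (add (add (mul (x 0) (y 0)) (mul (x 1) (y 1))) (mul (x 2) (y 2))) (mul (x 3) (y 3))
    | 1 => add (sub (add (mul (x 0) (y 1)) (mul (x 1) (y 0))) (mul (x 2) (y 3))) (mul (x 3) (y 2))
    | 2 => sub (add (add (mul (x 0) (y 2)) (mul (x 2) (y 0))) (mul (x 1) (y 3))) (mul (x 3) (y 1))
    | _ => sub (add (add (mul (x 0) (y 3)) (mul (x 3) (y 0))) (mul (x 1) (y 2))) (mul (x 2) (y 1))
    end].

(* quaternions over R[x,y]/<x^n-1,y^n-1>:  A = AQ int n, A_q = AQ 'F_q n *)
Definition AQ (R : Type) n := QuatT (RpT R n).

Definition qadd (R : nzRingType) n (X Y : AQ R n) : AQ R n := [ffun t => radd (X t) (Y t)].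
Definition qsub (R : nzRingType) n (X Y : AQ R n) : AQ R n := [ffun t => radd (X t) (ropp (Y t))].
Definition qmul (R : nzRingType) n (X Y : AQ R n) : AQ R n :=
  qmulW (@radd R n) (@ropp R n) (@rmul R n) X Y.
Definition qone (R : nzRingType) n : AQ R n :=
  [ffun t : 'I_4 => if nat_of_ord t == 0%N then rone R n else rzero R n].

(* quaternions over a ring R (L_q = QuatT 'F_q) *)
Definition lmul (R : nzRingType) (X Y : QuatT R) : QuatT R :=
  qmulW (fun a b : R => a + b) (fun a : R => - a) (fun a b : R => a * b) X Y.
Definition lone (R : nzRingType) : QuatT R := [ffun t : 'I_4 => if nat_of_ord t == 0%N then 1 else 0].

Definition red (q n : nat) (f : RpT int n) : RpT 'F_q n := [ffun k => (f k)%:~R].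
Definition qred (q n : nat) (X : AQ int n) : AQ 'F_q n := [ffun t => red q (X t)].
(* canonical lift of an element of R'_q to R' (coefficients in [0,q)) *)
Definition lift (q n : nat) (f : RpT 'F_q n) : RpT int n := [ffun k => Posz (nat_of_ord (f k))].

Definition Eset (q n : nat) : {set 'F_q * 'F_q} :=
  [set e | (e.1 ^+ n == 1) && (e.2 ^+ n == 1)].

(* Hamming weight of rho(X) for X in A_q *)
Definition hamq (q n : nat) (X : AQ 'F_q n) : nat :=
  #|[set te : 'I_4 * ('F_q * 'F_q) | (te.2 \in Eset q n) && (reval (X te.1) te.2.1 te.2.2 != 0)]|.

Definition Tset (q n : nat) (G : AQ int n) : {set 'F_q * 'F_q} :=
  [set e in Eset q n | [forall t : 'I_4, reval (red q (G t)) e.1 e.2 == 0]].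

Definition normQ n (F : AQ int n) : RpT int n :=
  let f t := F (@inord 3 t) in
  radd (rmul (f 0%N) (f 0%N))
       (ropp (radd (rmul (f 1%N) (f 1%N)) (radd (rmul (f 2%N) (f 2%N)) (rmul (f 3%N) (f 3%N))))).

(* Lagrange basis lambda_{a,b}(x,y) = ab/n^2 * (x^n-1)/(x-a) * (y^n-1)/(y-b) in R'_q *)
Definition lambdaQ (q n : nat) (e : 'F_q * 'F_q) : RpT 'F_q n :=
  [ffun k => e.1 * e.2 / (n%:R ^+ 2)
             * (('X^n - 1) %/ ('X - e.1%:P))`_(nat_of_ord k.1)
             * (('X^n - 1) %/ ('X - e.2%:P))`_(nat_of_ord k.2)].

Definition sigmaQ (q n : nat) (T : {set 'F_q * 'F_q}) (qs : 'F_q * 'F_q -> 'F_q) : RpT 'F_q n :=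
  [ffun k => \sum_(e in T) qs e * @lambdaQ q n e k].

Definition inQ (q n : nat) (sigma : RpT 'F_q n) (X : RpT int n) : Prop :=
  exists r s : RpT int n, X = radd (rscale (Posz q) r) (rmul s (lift sigma)).
Definition inJ (q n : nat) (sigma : RpT 'F_q n) (X : AQ int n) : Prop :=
  forall t : 'I_4, inQ sigma (X t).

(* vartheta = W o sigma in A_q (sigma central scalar) *)
Definition thetaQ (q n : nat) (W : QuatT 'F_q) (sigma : RpT 'F_q n) : AQ 'F_q n :=
  [ffun t => [ffun k => W t * sigma k]].

Definition chi (q n : nat) (F G : AQ int n) (Ht : AQ 'F_q n) (tau : AQ int n) : Prop :=
  exists F' alpha : AQ int n,
    [/\ qmul F F' = qmul F' F,
        qred q (qmul F F') = qred q (qadd (qone int n) (qmul alpha tau)) &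
        Ht = qred q (qadd (qmul F' G) tau)].

Definition ternary n (f : RpT int n) : Prop := forall k, f k \in [:: -1; 0; 1].

(* Main.v *)
Require Import Defs.
From HB Require Import structures.
From mathcomp Require Import all_boot all_order all_algebra.
From mathcomp Require Import ring.
Import Order.TTheory GRing.Theory Num.Theory.
Local Open Scope ring_scope.

Lemma qmulW_hom (T U : Type) (addT : T -> T -> T) (oppT : T -> T) (mulT : T -> T -> T)
  (addU : U -> U -> U) (oppU : U -> U) (mulU : U -> U -> U) (phi : T -> U)
  (X Y : QuatT T) (x y : QuatT U) :
  (forall a b, phi (addT a b) = addU (phi a) (phi b)) ->
  (forall a, phi (oppT a) = oppU (phi a)) ->
  (forall i j, phi (mulT (X i) (Y j)) = mulU (x i) (y j)) ->
  forall t, phi (qmulW addT oppT mulT X Y t) = qmulW addU oppU mulU x y t.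
Proof.
move=> hA hO hM t; rewrite !ffunE.
by case: t => [[|[|[|[|t]]]] Ht] /=; rewrite !hA ?hO !hM ?hO.
Qed.

Lemma lmulA (R : comNzRingType) (x y z : QuatT R) : lmul (lmul x y) z = lmul x (lmul y z).
Proof.
apply/ffunP => t; rewrite /lmul /qmulW !ffunE !inordK //.
case: t => [[|[|[|[|t]]]] Ht] /=; ring.
Qed.

Lemma lmul1 (R : comNzRingType) (x : QuatT R) : lmul x (lone R) = x.
Proof.
apply/ffunP => t; rewrite /lmul /qmulW !ffunE !inordK //=.
case: t => [[|[|[|[|t]]]] Ht] /=; rewrite ?mulr0 ?mulr1 ?addr0 ?subr0 ?add0r;
 try (by congr (x _); apply: val_inj; rewrite /= inordK).
Qed.

Lemma lmul0 (R : comNzRingType) (x : QuatT R) t : lmul x [ffun _ => 0] t = 0.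
Proof.
rewrite /lmul /qmulW !ffunE.
by case: t => [[|[|[|[|t]]]] Ht] /=; rewrite !mulr0 ?addr0 ?subr0.
Qed.

Section Red.
Variables (q n : nat).
Lemma red_radd f g : red q (radd f g) = radd (red q f) (red q g :> RpT 'F_q n).
Proof. by apply/ffunP => k; rewrite !ffunE intrD. Qed.
Lemma red_ropp f : red q (ropp f) = ropp (red q f :> RpT 'F_q n).
Proof. by apply/ffunP => k; rewrite !ffunE intrN. Qed.
Lemma red_rmul f g : red q (rmul f g) = rmul (red q f) (red q g :> RpT 'F_q n).
Proof.
apply/ffunP => k; rewrite !ffunE rmorph_sum; apply: eq_bigr => i _.
rewrite rmorph_sum; apply: eq_bigr => j _. rewrite !ffunE; exact: rmorphM.
Qed.
Lemma qred_qmul X Y : qred q (qmul X Y) = qmul (qred q X) (qred q Y :> AQ 'F_q n).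
Proof.
apply/ffunP => t; rewrite ffunE /qmul.
refine (@qmulW_hom _ _ _ _ _ _ _ _ (@red q n) _ _ _ _ _ _ _ t) => [a b|a|i j]; rewrite ?red_radd ?red_ropp ?red_rmul ?ffunE //.
Qed.
Lemma qred_qadd X Y : qred q (qadd X Y) = qadd (qred q X) (qred q Y :> AQ 'F_q n).
Proof. by apply/ffunP => t; rewrite !ffunE red_radd. Qed.
End Red.

Section Eval.
Variables (R : comNzRingType) (n : nat).
Implicit Types f g : RpT R n.
Lemma reval_radd f g a b : reval (radd f g) a b = reval f a b + reval g a b.
Proof. rewrite /reval -big_split; apply: eq_bigr => k _; by rewrite ffunE !mulrDl. Qed.
Lemma reval_ropp f a b : reval (ropp f) a b = - reval f a b.
Proof. rewrite /reval -sumrN; apply: eq_bigr => k _; by rewrite ffunE !mulNr. Qed.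
Lemma reval_rmul f g a b : (0 < n)%N -> a ^+ n = 1 -> b ^+ n = 1 ->
  reval (rmul f g) a b = reval f a b * reval g a b.
Proof.
move=> n0 an bn.
rewrite /reval big_distrl /=.
transitivity (\sum_(i : 'I_n * 'I_n) \sum_(k : 'I_n * 'I_n) \sum_(j : 'I_n * 'I_n |
       (((nat_of_ord i.1 + nat_of_ord j.1) %% n)%N == nat_of_ord k.1)
    && (((nat_of_ord i.2 + nat_of_ord j.2) %% n)%N == nat_of_ord k.2)) f i * g j * a ^+ k.1 * b ^+ k.2).
  rewrite exchange_big /=; apply: eq_bigr => k _; rewrite ffunE !mulr_suml; apply: eq_bigr => i _.
  by rewrite !mulr_suml.
apply: eq_bigr => i _; rewrite big_distrr /=.
rewrite (exchange_big_dep xpredT) //=.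
apply: eq_bigr => j _.
pose kk : 'I_n * 'I_n := (Ordinal (ltn_pmod (i.1 + j.1) n0), Ordinal (ltn_pmod (i.2 + j.2) n0)).
rewrite (big_pred1 kk) /=; last first.
  move=> [k1 k2] /=; rewrite /kk xpair_eqE -!val_eqE /= [_ == (_ %% n)%N]eq_sym.
  by rewrite [X in _ && X]eq_sym.
rewrite !expr_mod // !exprD; ring.
Qed.
End Eval.

Lemma poly_part (K : fieldType) (n : nat) (a a' : K) : (0 < n)%N -> a ^+ n = 1 -> a' ^+ n = 1 ->
  a != a' -> \sum_(i < n) (('X^n - 1) %/ ('X - a'%:P))`_i * a ^+ i = 0.
Proof.
move=> n0 an an' neq.
have dv : ('X - a'%:P) %| ('X^n - 1 : {poly K}).
  by rewrite dvdp_XsubCl /root !hornerE an' subrr.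
rewrite -horner_coef_wide; last first.
  rewrite size_divp ?polyXsubC_eq0 // size_Xn_sub_1 // size_XsubC /=.
  by rewrite subn1.
have := congr1 (fun p => p.[a]) (divpK dv) => /=.
rewrite hornerM !hornerE an subrr => /eqP; rewrite mulf_eq0 subr_eq0 (negbTE neq) orbF.
by move/eqP.
Qed.

Lemma reval_lambda (q n : nat) (e e' : 'F_q * 'F_q) : (0 < n)%N ->
  e \in Eset q n -> e' \in Eset q n -> e != e' -> reval (@lambdaQ q n e') e.1 e.2 = 0.
Proof.
move=> n0; rewrite !inE => /andP[/eqP a1 /eqP b1] /andP[/eqP a1' /eqP b1'] neq.
rewrite /reval.
pose c := e'.1 * e'.2 / (n%:R ^+ 2).
transitivity ((\sum_(i < n) c * (('X^n - 1) %/ ('X - e'.1%:P))`_i * e.1 ^+ i) *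
   (\sum_(j < n) (('X^n - 1) %/ ('X - e'.2%:P))`_j * e.2 ^+ j)).
  apply/esym; rewrite big_distrl /=. under eq_bigr do rewrite mulr_sumr.
  rewrite pair_big /=; apply: eq_bigr => k _; rewrite ffunE -/c; ring.
rewrite /c; clear c; case: e e' neq a1 b1 a1' b1' => [a b] [a' b'] /=; rewrite xpair_eqE negb_and => /orP[ha|hb] a1 b1 a1' b1'.
  under eq_bigr do rewrite -mulrA.
  by rewrite -mulr_sumr poly_part // mulr0 mul0r.
by rewrite poly_part // mulr0.
Qed.

Definition evq {q n : nat} (X : AQ 'F_q n) (e : 'F_q * 'F_q) : QuatT 'F_q :=
  [ffun t => reval (X t) e.1 e.2].

Lemma reval_qmul (q n : nat) (X Y : AQ 'F_q n) e t : (0 < n)%N -> e \in Eset q n ->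
  reval (qmul X Y t) e.1 e.2 = lmul (evq X e) (evq Y e) t.
Proof.
move=> n0; rewrite inE => /andP[/eqP a1 /eqP b1].
refine (@qmulW_hom _ _ _ _ _ _ _ _ (fun f : RpT 'F_q n => reval f e.1 e.2) _ _ _ _ _ _ _ t)
  => [a b|a|i j] /=; rewrite ?reval_radd ?reval_ropp ?reval_rmul ?ffunE //.
Qed.

Lemma reval_theta (q n : nat) (W : QuatT 'F_q) (s : RpT 'F_q n) t a b :
  reval (thetaQ W s t) a b = W t * reval s a b.
Proof. rewrite /reval mulr_sumr; apply: eq_bigr => k _; by rewrite !ffunE !mulrA. Qed.

Lemma reval_sigma_out (q n : nat) (T : {set 'F_q * 'F_q}) qs e : (0 < n)%N ->
  e \in Eset q n -> e \notin T -> T \subset Eset q n -> reval (sigmaQ n T qs) e.1 e.2 = 0.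
Proof.
move=> n0 eE eT TE; rewrite /reval.
under eq_bigr do rewrite ffunE mulr_suml mulr_suml.
rewrite exchange_big big1 // => e' He'.
transitivity (qs e' * reval (@lambdaQ q n e') e.1 e.2).
  rewrite /reval mulr_sumr; apply: eq_bigr => k _; by rewrite !mulrA.
rewrite reval_lambda ?mulr0 //; first exact: (subsetP TE).
by apply: contraNneq eT => ->.
Qed.

Section RmulLin.
Variables (R : comNzRingType) (n : nat).
Implicit Types f g h : RpT R n.
Lemma rmulDl f g h k : rmul (radd f g) h k = rmul f h k + rmul g h k.
Proof.
rewrite !ffunE -big_split; apply: eq_bigr => i _; rewrite -big_split; apply: eq_bigr => j _.
by rewrite ffunE mulrDl.
Qed.
Lemma rmulNl f h k : rmul (ropp f) h k = - rmul f h k.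
Proof.
rewrite !ffunE -sumrN; apply: eq_bigr => i _; rewrite -sumrN; apply: eq_bigr => j _.
by rewrite ffunE mulNr.
Qed.
Lemma rmulZl c f h k : rmul (rscale c f) h k = c * rmul f h k.
Proof.
rewrite !ffunE mulr_sumr; apply: eq_bigr => i _; rewrite mulr_sumr; apply: eq_bigr => j _.
by rewrite ffunE mulrA.
Qed.
Lemma rmulZr c f h : rmul f (rscale c h) = rscale c (rmul f h).
Proof.
apply/ffunP => k; rewrite !ffunE mulr_sumr; apply: eq_bigr => i _; rewrite mulr_sumr; apply: eq_bigr => j _.
by rewrite ffunE mulrCA.
Qed.
Lemma rmul_c1 c f : (0 < n)%N -> rmul f (rscale c (rone R n)) = rscale c f.
Proof.
move=> n0; apply/ffunP => k; rewrite !ffunE.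
pose z : 'I_n := Ordinal n0.
rewrite (bigD1 k) //= [X in _ + X]big1 ?addr0; last first.
  move=> i neq; apply: big1 => j /andP[/eqP h1 /eqP h2].
  rewrite !ffunE; case: ifP; rewrite ?mulr0 // => /andP[/eqP j1 /eqP j2].
  move: h1 h2; rewrite j1 j2 !addn0 !modn_small // => h1 h2.
  by case/eqP: neq; case: i k h1 h2 => [i1 i2] [k1 k2] /= h1 h2; congr pair; apply: val_inj.
rewrite (bigD1 (z, z)) /=; last by rewrite !addn0 !modn_small ?eqxx.
rewrite [X in _ + X]big1 ?addr0; last first.
  move=> j /andP[_ nz]; rewrite !ffunE; case: ifP; rewrite ?mulr0 // => /andP[/eqP j1 /eqP j2].
  by case/eqP: nz; case: j j1 j2 => [j1 j2] /= h1 h2; congr pair; apply: val_inj.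
by rewrite !ffunE /= mulr1 mulrC.
Qed.
End RmulLin.

Definition cq {K : nzRingType} {n : nat} (W : QuatT K) : AQ K n :=
  [ffun t => rscale (W t) (rone K n)].

Lemma claim1_alg (q n : nat) (S : AQ 'F_q n) (W W' : QuatT 'F_q) (s : RpT 'F_q n) :
  (0 < n)%N -> lmul W' W = lone 'F_q ->
  qmul (qmul S (cq W')) (thetaQ W s) = [ffun t => rmul (S t) s].
Proof.
move=> n0 hW; apply/ffunP => t; apply/ffunP => k; rewrite (ffunE (fun t => rmul (S t) s)).
pose A : AQ _ n := qmul S (cq W').
pose p : QuatT 'F_q := [ffun l => rmul (S l) s k].
pose x : QuatT 'F_q := [ffun i => rmul (A i) s k].
rewrite -/A; have -> : qmul A (thetaQ W s) t k = lmul x W t.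
  refine (@qmulW_hom _ _ _ _ _ _ _ _ (fun f : RpT 'F_q n => f k) _ _ _ _ _ _ _ t)
    => [a b|a|i j] /=; [by rewrite ffunE | by rewrite ffunE |].
  have -> : thetaQ W s j = rscale (W j) s by apply/ffunP => l; rewrite !ffunE.
  rewrite rmulZr ffunE (ffunE (fun i => rmul (A i) s k)); exact: mulrC.
have -> : x = lmul p W'.
  apply/ffunP => i; rewrite ffunE.
  refine (@qmulW_hom _ _ _ _ _ _ _ _ (fun f : RpT 'F_q n => rmul f s k) _ _ _ _ _ _ _ i)
    => [a b|a|l m] /=; rewrite ?rmulDl ?rmulNl //.
  rewrite (ffunE (fun t => rscale (W' t) (rone _ n))) rmul_c1 // rmulZl.
  rewrite (ffunE (fun l => rmul (S l) s k)); exact: mulrC.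
by rewrite lmulA hW lmul1 ffunE.
Qed.

Lemma red_lift (q n : nat) (f : RpT 'F_q n) : red q (Defs.lift f) = f.
Proof. by apply/ffunP => k; rewrite !ffunE /= -pmulrn natr_Zp. Qed.

Lemma red_qone (q n : nat) t : red q (qone int n t) = qone 'F_q n t.
Proof.
rewrite !ffunE; case: ifP => _; apply/ffunP => k; rewrite !ffunE //.
by case: ifP.
Qed.

Lemma red_scaleq (q n : nat) (f : RpT int n) : prime q ->
  red q (rscale (Posz q) f) = rzero 'F_q n.
Proof. by move=> qP; apply/ffunP => k; rewrite !ffunE intrM /= -pmulrn pchar_Fp_0 // mul0r. Qed.

Lemma inJ_red (q n : nat) (sg : RpT 'F_q n) (A : AQ int n) : prime q ->
  inJ sg (qsub A (qone int n)) ->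
  exists S : AQ 'F_q n, qred q A = qadd (qone 'F_q n) [ffun t => rmul (S t) sg].
Proof.
move=> qP hJ.
have /fin_all_exists [r hr] : forall t, exists r, exists s,
   qsub A (qone int n) t = radd (rscale (Posz q) r) (rmul s (Defs.lift sg)) := hJ.
have /fin_all_exists [s hs] := hr.
exists [ffun t => red q (s t)].
apply/ffunP => t.
have E1 : A t = radd (radd (rscale (Posz q) (r t)) (rmul (s t) (Defs.lift sg))) (qone int n t).
  rewrite -hs; apply/ffunP => k; rewrite !ffunE; by rewrite subrK.
rewrite ffunE E1 !red_radd red_scaleq // red_rmul red_lift red_qone.
apply/ffunP => k; rewrite !ffunE add0r addrC.
by [].
Qed.

Lemma qaddE (R : nzRingType) n (X Y : AQ R n) t : qadd X Y t = radd (X t) (Y t).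
Proof. by rewrite ffunE. Qed.

Theorem proposition2
  (n p q : nat) (F G Finv : AQ int n) (qs : 'F_q * 'F_q -> 'F_q)
  (W : QuatT 'F_q) (Ht : AQ 'F_q n) :
  prime n -> prime p -> prime q -> p != q -> coprime p q -> coprime n q ->
  (n %| q.-1)%N ->
  (forall t, ternary (F t)) -> (forall t, ternary (G t)) ->
  Tset q G != set0 ->
  (forall e, e \in Eset q n -> reval (red q (normQ F)) e.1 e.2 = 0 -> e \in Tset q G) ->
  (forall e, e \in Tset q G -> qs e != 0) ->
  qmul F Finv = qmul Finv F ->
  inJ (sigmaQ n (Tset q G) qs) (qsub (qmul F Finv) (qone int n)) ->
  (exists W' : QuatT 'F_q, lmul W W' = lone 'F_q /\ lmul W' W = lone 'F_q) ->
  (forall t, W t != 0) ->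
  Ht = qadd (qred q (qmul Finv G)) (thetaQ W (sigmaQ n (Tset q G) qs)) ->
  let theta := thetaQ W (sigmaQ n (Tset q G) qs) in
  [/\ exists tau : AQ int n, chi F G Ht tau /\ qred q tau = theta,
      forall tau : AQ int n, chi F G Ht tau -> (hamq theta <= hamq (qred q tau))%N &
      forall tau : AQ int n, chi F G Ht tau -> qred q tau != theta ->
        (hamq (qmul (qred q F) theta) <= hamq (qred q (qmul F tau)))%N].
Proof.
move=> nP _ qP _ _ _ _ _ _ _ _ _ hcomm hJ [W' [_ hW'W]] _ hHt theta.
have n0 : (0 < n)%N := prime_gt0 nP.
set T := Tset q G in hJ hHt theta *.
set sg := sigmaQ n T qs in hJ hHt theta *.
have TE : T \subset Eset q n by apply/subsetP => e; rewrite inE => /andP[].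
have theta_out : forall e t, e \in Eset q n -> e \notin T -> reval (theta t) e.1 e.2 = 0.
  by move=> e t eE eT; rewrite reval_theta reval_sigma_out ?mulr0.
have Gz : forall e, e \in T -> evq (qred q G) e = [ffun _ => 0].
  move=> e; rewrite inE => /andP[_ /forallP hG]; apply/ffunP => t; rewrite !ffunE.
  by apply/eqP; exact: hG.
have key : forall tau, chi F G Ht tau -> forall e t, e \in T ->
    reval (qred q tau t) e.1 e.2 = reval (theta t) e.1 e.2.
  move=> tau [F' [alpha [_ _ hH]]] e t eT.
  have eE : e \in Eset q n := subsetP TE e eT.
  have := congr1 (fun X : AQ 'F_q n => reval (X t) e.1 e.2) (etrans (esym hHt) hH) => /=.
  rewrite !qred_qadd !qaddE !reval_radd !qred_qmul !reval_qmul // Gz // !lmul0 !add0r.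
  by move=> ->.
split.
- pose tau : AQ int n := [ffun t => Defs.lift (theta t)].
  have htau : qred q tau = theta by apply/ffunP => t; rewrite !ffunE red_lift.
  have [S hS] := @inJ_red q n _ _ qP hJ.
  pose alpha : AQ int n := [ffun t => Defs.lift ((qmul S (cq W')) t)].
  have halpha : qred q alpha = qmul S (cq W') by apply/ffunP => t; rewrite !ffunE red_lift.
  exists tau; split => //; exists Finv, alpha; split => //.
    rewrite hS qred_qadd qred_qmul htau halpha claim1_alg //.
    congr qadd; apply/ffunP => t; by rewrite [RHS]ffunE red_qone.
  rewrite qred_qadd htau hHt /theta; reflexivity.
- move=> tau htau; apply: subset_leq_card; apply/subsetP => [[t e]].
  rewrite in_set /= => /andP[eE nz]; rewrite in_set /= eE /=.
  case: (boolP (e \in T)) => eT; first by rewrite key.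
  by move: nz; rewrite theta_out // eqxx.
- move=> tau htau _; apply: subset_leq_card; apply/subsetP => [[t e]].
  rewrite in_set /= => /andP[eE nz]; rewrite in_set /= eE /=.
  move: nz; rewrite reval_qmul // qred_qmul reval_qmul //.
  case: (boolP (e \in T)) => eT.
    suff -> : evq theta e = evq (qred q tau) e by [].
    by apply/ffunP => t'; rewrite [LHS]ffunE [RHS]ffunE (key _ htau).
  suff -> : evq theta e = [ffun _ => 0] by rewrite lmul0 eqxx.
  by apply/ffunP => t'; rewrite [LHS]ffunE [RHS]ffunE theta_out.
Qed.
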